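(* Let $A,B\in\mathbb{Z}$ with $4A^3+27B^2\ne0$, let $M$ be a positive integer with $\max\{10\sqrt{|A|},5\sqrt[3]{|B|}\}\le M$, let $D$ be a squarefree positive integer and $E_D: y^2=x^3+D^2Ax+D^3B$. Let $P,Q\in E_D(\mathbb{Q})$ with $MD\le x(P)<x(Q)$ and $y(P)y(Q)<0$. Then for every real $\mu$ with $1<\mu\le x(Q)/x(P)$, \[x(P)\le x(P+Q)\le \frac{(2\mu+1)^2}{(\mu-1)^2}\,x(P).\] *)

(* Defs.v *)
From HB Require Import structures.
From mathcomp Require Import all_boot all_order all_algebra.
From mathcomp Require Import reals exp.
Set Implicit Arguments. Unset Strict Implicit. Unset Printing Implicit Defensive.
Import Order.TTheory GRing.Theory Num.Theory.
Local Open Scope ring_scope.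

Definition squarefree (n : nat) : Prop :=
  forall d : nat, (d * d %| n)%N -> d = 1%N.

Inductive ecpoint := EInf | EAff of rat & rat.

Definition on_curve (a b : rat) (P : ecpoint) : Prop :=
  match P with
  | EInf => True
  | EAff x y => y ^+ 2 = x ^+ 3 + a * x + b
  end.

Definition ec_add (a : rat) (P Q : ecpoint) : ecpoint :=
  match P, Q with
  | EInf, _ => Q
  | _, EInf => P
  | EAff x1 y1, EAff x2 y2 =>
      if x1 == x2 then
        if y1 == - y2 then EInf
        else let l := (3 * x1 ^+ 2 + a) / (2 * y1) in
             let x3 := l ^+ 2 - 2 * x1 in
             EAff x3 (l * (x1 - x3) - y1)
      else let l := (y2 - y1) / (x2 - x1) in
           let x3 := l ^+ 2 - x1 - x2 in
           EAff x3 (l * (x1 - x3) - y1)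
  end.

(* Main.v *)
Require Import Defs.
From HB Require Import structures.
From mathcomp Require Import all_boot all_order all_algebra.
From mathcomp Require Import reals exp.
From mathcomp Require Import ring lra.
Import Order.TTheory GRing.Theory Num.Theory.
Local Open Scope ring_scope.

Lemma keyA (F : realFieldType) (p q a b y1 y2 : F) : 0 < p -> p < q ->
  100 * `|a| <= p ^+ 2 -> 125 * `|b| <= p ^+ 3 ->
  y1 ^+ 2 = p ^+ 3 + a * p + b -> y2 ^+ 2 = q ^+ 3 + a * q + b -> y1 * y2 < 0 ->
  (2 * p + q) * (q - p) ^+ 2 <= (y2 - y1) ^+ 2 /\
  (y2 - y1) ^+ 2 <= (p + q) * (q - p) ^+ 2 + p * (2 * q + p) ^+ 2.
Proof.
move=> p0 pq ha hb e1 e2 yy.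
have [a1 a2] : - p ^+ 2 <= 100 * a /\ 100 * a <= p ^+ 2.
  have h1 := ler_norm a; have h2 : - a <= `|a| by rewrite -normrN ler_norm.
  lra.
have [b1 b2] : - p ^+ 3 <= 125 * b /\ 125 * b <= p ^+ 3.
  have h1 := ler_norm b; have h2 : - b <= `|b| by rewrite -normrN ler_norm.
  lra.
have E : (y2 - y1) ^+ 2 = y1 ^+ 2 + y2 ^+ 2 - 2 * (y1 * y2) by ring.
have hpq : 0 < p + q by lra.
have c1 : - p ^+ 2 * (p + q) <= 100 * a * (p + q) by rewrite ler_pM2r.
have c2 : 100 * a * (p + q) <= p ^+ 2 * (p + q) by rewrite ler_pM2r.
have p2q : p ^+ 2 * p <= p ^+ 2 * q by rewrite ler_pM2l ?exprn_gt0 // ltW.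
have p3 : p ^+ 3 = p ^+ 2 * p by rewrite exprS mulrC.
split.
  rewrite E e1 e2.
  have : 0 < p ^+ 3 by rewrite exprn_gt0.
  nra.
set S := (p + q) * (q - p) ^+ 2 + p * (2 * q + p) ^+ 2 - y1 ^+ 2 - y2 ^+ 2.
suff : - 2 * (y1 * y2) <= S by rewrite E /S; lra.
have SE : S = 3 * p * q ^+ 2 + 3 * p ^+ 2 * q + p ^+ 3 - a * (p + q) - 2 * b.
  by rewrite /S e1 e2; ring.
have Sge : 3 * p * q ^+ 2 <= S by rewrite SE; lra.
have pq2 : 0 <= p * q ^+ 2 by rewrite mulr_ge0 // ?sqr_ge0 // ltW.
have S0 : 0 <= S by lra.
have Z : 0 <= - 2 * (y1 * y2) by lra.
rewrite -(@ler_pXn2r _ 2%N) // ?nnegrE //.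
have c3 : 100 * a * q <= p ^+ 2 * q by rewrite ler_pM2r //; lra.
have c4 : 100 * a * p <= p ^+ 2 * p by rewrite ler_pM2r //; lra.
have f1 : y1 ^+ 2 <= 11/10 * p ^+ 3 by rewrite e1; lra.
have q3 : p ^+ 2 * q <= q ^+ 3.
  rewrite [q ^+ 3]exprS mulrC ler_pM2l; last lra.
  by rewrite ler_pXn2r ?nnegrE ?ltW //; lra.
have f2 : y2 ^+ 2 <= 11/10 * q ^+ 3 by rewrite e2; lra.
have L : (- 2 * (y1 * y2)) ^+ 2 = 4 * (y1 ^+ 2 * y2 ^+ 2) by ring.
rewrite L.
apply: (@le_trans _ _ (4 * (11/10 * p ^+ 3 * (11/10 * q ^+ 3)))).
  rewrite ler_pM2l //; apply: ler_pM => //; apply: sqr_ge0.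
apply: (@le_trans _ _ ((3 * p * q ^+ 2) ^+ 2)); last first.
  by rewrite ler_pXn2r ?nnegrE //; lra.
have pq3 : p ^+ 3 * q ^+ 3 <= p ^+ 2 * q ^+ 4.
  have -> : p ^+ 3 * q ^+ 3 = (p ^+ 2 * q ^+ 3) * p by ring.
  have -> : p ^+ 2 * q ^+ 4 = (p ^+ 2 * q ^+ 3) * q by ring.
  have q0 : 0 < q by lra.
  by rewrite ler_pM2l ?ltW // mulr_gt0 // exprn_gt0.
have -> : (3 * p * q ^+ 2) ^+ 2 = 9 * (p ^+ 2 * q ^+ 4) by ring.
have : 0 <= p ^+ 3 * q ^+ 3 by rewrite mulr_ge0 // exprn_ge0 // ltW //; lra.
lra.
Qed.
Lemma boundA (R : realType) (A : int) (M : nat) :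
  10 * Num.sqrt `|A%:~R : R| <= M%:R -> 100 * `|A%:~R : rat| <= (M%:R : rat) ^+ 2.
Proof.
move=> h.
have hR : 100 * `|A%:~R : R| <= (M%:R) ^+ 2.
  have e : 100 * `|A%:~R : R| = (10 * Num.sqrt `|A%:~R : R|) ^+ 2.
    by rewrite exprMn sqr_sqrtr // -natrX.
  rewrite e ler_pXn2r ?nnegrE ?mulr_ge0 ?sqrtr_ge0 //.
suff: ratr (100 * `|A%:~R : rat|) <= ratr ((M%:R : rat) ^+ 2) :> R by rewrite ler_rat.
rewrite rmorphM rmorphXn /= !rmorph_nat -!intr_norm ratr_int.
rewrite intr_norm.
exact: hR.
Qed.

Lemma boundB (R : realType) (B : int) (M : nat) :
  5 * powR `|B%:~R : R| (3%:R^-1) <= M%:R -> 125 * `|B%:~R : rat| <= (M%:R : rat) ^+ 3.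
Proof.
move=> h.
have hR : 125 * `|B%:~R : R| <= (M%:R) ^+ 3.
  have e : 125 * `|B%:~R : R| = (5 * powR `|B%:~R : R| (3%:R^-1)) ^+ 3.
    rewrite exprMn -(powR_mulrn 3 (powR_ge0 _ _)) -powRrM mulVf ?pnatr_eq0 // powRr1 //.
    by rewrite -natrX.
  rewrite e ler_pXn2r ?nnegrE ?mulr_ge0 ?powR_ge0 //.
suff: ratr (125 * `|B%:~R : rat|) <= ratr ((M%:R : rat) ^+ 3) :> R by rewrite ler_rat.
rewrite rmorphM rmorphXn /= !rmorph_nat -!intr_norm ratr_int.
rewrite intr_norm.
exact: hR.
Qed.

Lemma finalR (R : realFieldType) (P Q mu : R) : 0 < P -> P < Q -> 1 < mu -> mu <= Q / P ->
  P * (2 * Q + P) ^+ 2 / (Q - P) ^+ 2 <= (2 * mu + 1) ^+ 2 / (mu - 1) ^+ 2 * P.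
Proof.
move=> P0 PQ hmu1 hmuQ.
have muP : mu * P <= Q by rewrite -ler_pdivlMr.
have QP0 : 0 < Q - P by rewrite subr_gt0.
have m0 : 0 < mu - 1 by rewrite subr_gt0.
have r : (2 * Q + P) / (Q - P) <= (2 * mu + 1) / (mu - 1).
  rewrite ler_pdivrMr // mulrAC ler_pdivlMr // -subr_ge0.
  have -> : (2 * mu + 1) * (Q - P) - (2 * Q + P) * (mu - 1) = 3 * (Q - mu * P) by ring.
  by rewrite pmulr_rge0 // subr_ge0.
have r2 : ((2 * Q + P) / (Q - P)) ^+ 2 <= ((2 * mu + 1) / (mu - 1)) ^+ 2.
  rewrite ler_pXn2r ?nnegrE // divr_ge0 //; lra.
rewrite -!expr_div_n -mulrA mulrC ler_pM2r //.
by rewrite -expr_div_n.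
Qed.

Theorem lemma3p7 (R : realType) (A B : int) (M D : nat) (xP yP xQ yQ : rat) :
  4 * A ^+ 3 + 27 * B ^+ 2 != 0 ->
  (0 < M)%N ->
  Num.max (10 * Num.sqrt `|A%:~R : R|) (5 * powR `|B%:~R : R| (3%:R^-1)) <= M%:R ->
  (0 < D)%N -> squarefree D ->
  let a : rat := (D ^ 2)%:R * A%:~R in
  let b : rat := (D ^ 3)%:R * B%:~R in
  on_curve a b (EAff xP yP) -> on_curve a b (EAff xQ yQ) ->
  (M * D)%:R <= xP -> xP < xQ -> yP * yQ < 0 ->
  forall mu : R, 1 < mu -> mu <= ratr xQ / ratr xP ->
  exists x3 y3 : rat,
    ec_add a (EAff xP yP) (EAff xQ yQ) = EAff x3 y3 /\
    xP <= x3 /\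
    ratr x3 <= (2 * mu + 1) ^+ 2 / (mu - 1) ^+ 2 * ratr xP.
Proof.
move=> _ hM0 hmax hD0 _ a b onP onQ hMD hPQ hyy mu hmu1 hmuQ.
have hA : 100 * `|A%:~R : rat| <= (M%:R : rat) ^+ 2.
  by apply: (boundA R); apply: le_trans hmax; rewrite le_max lexx.
have hB : 125 * `|B%:~R : rat| <= (M%:R : rat) ^+ 3.
  by apply: (boundB R); apply: le_trans hmax; rewrite le_max lexx orbT.
have MD0 : (0 : rat) < (M * D)%:R by rewrite ltr0n muln_gt0 hM0.
have p0 : 0 < xP by apply: lt_le_trans hMD.
have D0 : (0 : rat) < D%:R by rewrite ltr0n.
have ha : 100 * `|a| <= xP ^+ 2.
  apply: (@le_trans _ _ (((M * D)%:R) ^+ 2)).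
    rewrite /a normrM normr_nat natrX natrM exprMn.
    rewrite mulrCA [X in _ <= X]mulrC ler_pM2l ?exprn_gt0 //.
  rewrite ler_pXn2r; [exact: hMD | by [] | rewrite nnegrE; exact: ler0n | rewrite nnegrE; exact: ltW p0].
have hb : 125 * `|b| <= xP ^+ 3.
  apply: (@le_trans _ _ (((M * D)%:R) ^+ 3)).
    rewrite /b normrM normr_nat natrX natrM exprMn.
    rewrite mulrCA [X in _ <= X]mulrC ler_pM2l ?exprn_gt0 //.
  rewrite ler_pXn2r; [exact: hMD | by [] | rewrite nnegrE; exact: ler0n | rewrite nnegrE; exact: ltW p0].
have [k1 k2] := keyA _ _ _ _ _ _ _ p0 hPQ ha hb onP onQ hyy.
pose l := (yQ - yP) / (xQ - xP).
pose x3 := l ^+ 2 - xP - xQ.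
exists x3, (l * (xP - x3) - yP).
have qp : 0 < (xQ - xP) ^+ 2 by apply: exprn_gt0; rewrite subr_gt0.
have l2 : l ^+ 2 = (yQ - yP) ^+ 2 / (xQ - xP) ^+ 2 by rewrite /l expr_div_n.
split; first by rewrite /ec_add (lt_eqF hPQ).
split.
  rewrite /x3 -subr_ge0.
  have -> : l ^+ 2 - xP - xQ - xP = l ^+ 2 - (2 * xP + xQ) by ring.
  by rewrite subr_ge0 l2 ler_pdivlMr.
have u : x3 <= xP * (2 * xQ + xP) ^+ 2 / (xQ - xP) ^+ 2.
  have : l ^+ 2 <= ((xP + xQ) * (xQ - xP) ^+ 2 + xP * (2 * xQ + xP) ^+ 2) / (xQ - xP) ^+ 2.
    rewrite l2 ler_pM2r; first exact: k2.
    rewrite invr_gt0; exact: qp.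
  have -> : ((xP + xQ) * (xQ - xP) ^+ 2 + xP * (2 * xQ + xP) ^+ 2) / (xQ - xP) ^+ 2
     = xP + xQ + xP * (2 * xQ + xP) ^+ 2 / (xQ - xP) ^+ 2.
    field; rewrite subr_eq0 eq_sym (lt_eqF hPQ); exact: erefl.
  rewrite addrC => H.
  rewrite /x3 -addrA -opprD lerBlDr; exact: H.
have ur : ratr x3 <= ratr xP * (2 * ratr xQ + ratr xP) ^+ 2 / (ratr xQ - ratr xP) ^+ 2 :> R.
  have u' : ratr x3 <= ratr (xP * (2 * xQ + xP) ^+ 2 / (xQ - xP) ^+ 2) :> R.
    rewrite ler_rat; exact: u.
  move: u'; rewrite !rmorphM rmorphV; last by rewrite unitfE; apply: lt0r_neq0; exact: qp.
  rewrite !rmorphXn !rmorphB rmorphD rmorphM /= rmorph_nat; exact.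
apply: (le_trans ur).
apply: finalR.
- rewrite ltr0q; exact: p0.
- rewrite ltr_rat; exact: hPQ.
- exact: hmu1.
- exact: hmuQ.
Qed.
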